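(* Let $P \subseteq \mathbb{R}^{n}$ be a half-integral polytope of dimension $d$, and suppose that there is an integer $s$ such that every vertex of $P$ has exactly $n-s$ coordinates equal to $1/2$. Then there is a shadow pivot rule such that, for every linear objective $\mathbf{c}$ and every starting vertex, the total number of non-degenerate steps taken by the Simplex method with this rule to solve $\max\{\mathbf{c}^{\intercal}\mathbf{x} : \mathbf{x}\in P\}$ is at most $2s$.
   Context: A half-integral polytope is a polytope all of whose vertices lie in $\{0,\tfrac12,1\}^{n}$. For linear objectives $\mathbf{c},\mathbf{d}$, let $F_0$ be the $\mathbf{d}$-minimal face of $P$; a $\mathbf{c}$-coherent $\mathbf{d}$-monotone path is a sequence of vertices $\mathbf{x}^0,\mathbf{x}^1,\dots,\mathbf{x}^m$ where $\mathbf{x}^0$ is a $\mathbf{c}$-maximum of $F_0$, $\mathbf{x}^m$ is a $\mathbf{c}$-maximum of the $\mathbf{d}$-maximal face, and $\mathbf{x}^{i+1}$ maximizes $\frac{\mathbf{c}^{\intercal}(\mathbf{u}-\mathbf{x}^i)}{\mathbf{d}^{\intercal}(\mathbf{u}-\mathbf{x}^i)}$ over all neighbors $\mathbf{u}$ of $\mathbf{x}^i$ (in the graph of $P$) with $\mathbf{d}^{\intercal}\mathbf{u}>\mathbf{d}^{\intercal}\mathbf{x}^i$. A shadow pivot rule for the Simplex method chooses, from the initial vertex $\mathbf{x}^0$ and the objective $\mathbf{c}$, an auxiliary vector $\mathbf{d}$ such that $\mathbf{x}^0$ is the $\mathbf{c}$-maximum of the $\mathbf{d}$-minimal face of $P$,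 and then pivots so that its non-degenerate steps (pivots that move along an edge of $P$ rather than staying at the same vertex) trace exactly the $\mathbf{c}$-coherent $\mathbf{d}$-monotone path. *)

(* Defs.v *)
From HB Require Import structures.
From mathcomp Require Import all_boot all_order all_algebra.
Set Implicit Arguments. Unset Strict Implicit. Unset Printing Implicit Defensive.
Import Order.TTheory GRing.Theory Num.Theory.
Local Open Scope ring_scope.

Section Polytopes.
Variables (R : realFieldType) (n : nat).
Notation vec := 'rV[R]_n.

Definition dot (c x : vec) : R := \sum_(i < n) c 0 i * x 0 i.

(* the polytope P = conv V, for a finite list of points V *)
Definition in_hull (V : seq vec) (x : vec) : Prop :=
  exists w : 'I_(size V) -> R,
    [/\ forall i, 0 <= w i, \sum_i w i = 1 & x = \sum_i w i *: V`_i].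

Definition is_vertex (V : seq vec) (x : vec) : Prop :=
  in_hull V x /\
  exists a : vec, forall y, in_hull V y -> y <> x -> dot a y < dot a x.

Definition in_segment (u v z : vec) : Prop :=
  exists t : R, [/\ 0 <= t, t <= 1 & z = (1 - t) *: u + t *: v].

Definition adjacent (V : seq vec) (u v : vec) : Prop :=
  [/\ is_vertex V u, is_vertex V v, u <> v &
   exists a : vec,
     dot a u = dot a v /\
     forall z, in_hull V z ->
       dot a z <= dot a u /\ (dot a z = dot a u -> in_segment u v z)].

Definition cmax_of_dmin_face (V : seq vec) (c d x : vec) : Prop :=
  [/\ is_vertex V x,
      forall y, in_hull V y -> dot d x <= dot d y &
      forall y, in_hull V y -> (forall z, in_hull V z -> dot d y <= dot d z) ->
        dot c y <= dot c x].

Definition cmax_of_dmax_face (V : seq vec) (c d x : vec) : Prop :=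
  [/\ is_vertex V x,
      forall y, in_hull V y -> dot d y <= dot d x &
      forall y, in_hull V y -> (forall z, in_hull V z -> dot d z <= dot d y) ->
        dot c y <= dot c x].

Definition coherent_step (V : seq vec) (c d x y : vec) : Prop :=
  [/\ adjacent V x y, dot d x < dot d y &
   forall u, adjacent V x u -> dot d x < dot d u ->
     dot c (u - x) / dot d (u - x) <= dot c (y - x) / dot d (y - x)].

Definition coherent_path (V : seq vec) (c d : vec) (p : seq vec) : Prop :=
  [/\ (0 < size p)%N,
      cmax_of_dmin_face V c d (head 0 p),
      cmax_of_dmax_face V c d (last 0 p) &
      forall i, (i.+1 < size p)%N -> coherent_step V c d (nth 0 p i) (nth 0 p i.+1)].

Definition half_integral (V : seq vec) : Prop :=
  forall x, is_vertex V x -> forall i, x 0 i \in [:: 0; 2^-1; 1].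

Definition num_halves (x : vec) : nat := #|[set i : 'I_n | x 0 i == 2^-1]|.

End Polytopes.

(* Main.v *)
Require Import Defs.
From HB Require Import structures.
From mathcomp Require Import all_boot all_order all_algebra.
From mathcomp Require Import lra zify.
Set Implicit Arguments. Unset Strict Implicit. Unset Printing Implicit Defensive.
Import Order.TTheory GRing.Theory Num.Theory.
Local Open Scope ring_scope.


Lemma dotDl (R : realFieldType) (n : nat) (a b x : 'rV[R]_n) :
  dot (a + b) x = dot a x + dot b x.
Proof. rewrite /dot -big_split; apply: eq_bigr => i _; rewrite mxE mulrDl. by []. Qed.

Lemma dotZl (R : realFieldType) (n : nat) (k : R) (a x : 'rV[R]_n) :
  dot (k *: a) x = k * dot a x.
Proof. rewrite /dot mulr_sumr; apply: eq_bigr => i _; rewrite mxE mulrA. by []. Qed.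

Lemma dotNl (R : realFieldType) (n : nat) (a x : 'rV[R]_n) :
  dot (- a) x = - dot a x.
Proof. rewrite /dot -sumrN; apply: eq_bigr => i _; rewrite mxE mulNr. by []. Qed.

Lemma dotDr (R : realFieldType) (n : nat) (a x y : 'rV[R]_n) :
  dot a (x + y) = dot a x + dot a y.
Proof. rewrite /dot -big_split; apply: eq_bigr => i _; rewrite mxE mulrDr. by []. Qed.

Lemma dotZr (R : realFieldType) (n : nat) (k : R) (a x : 'rV[R]_n) :
  dot a (k *: x) = k * dot a x.
Proof. rewrite /dot mulr_sumr; apply: eq_bigr => i _; rewrite mxE mulrCA. by []. Qed.

Lemma dotBr (R : realFieldType) (n : nat) (a x y : 'rV[R]_n) :
  dot a (x - y) = dot a x - dot a y.
Proof. rewrite /dot -sumrB; apply: eq_bigr => i _; rewrite !mxE mulrBr. by []. Qed.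

Lemma dotC (R : realFieldType) (n : nat) (a x : 'rV[R]_n) : dot a x = dot x a.
Proof. by rewrite /dot; apply: eq_bigr => i _; rewrite mulrC. Qed.

Lemma dot_sum (R : realFieldType) (n m : nat) (a : 'rV[R]_n) (F : 'I_m -> 'rV[R]_n) :
  dot a (\sum_i F i) = \sum_i dot a (F i).
Proof.
rewrite /dot (exchange_big); apply: eq_bigr => i _.
by rewrite summxE mulr_sumr.
Qed.

Lemma hull_dot (R : realFieldType) (n : nat) (V : seq 'rV[R]_n) y :
  in_hull V y -> exists w : 'I_(size V) -> R,
    [/\ forall i, 0 <= w i, \sum_i w i = 1 &
        forall a, dot a y = \sum_i w i * dot a V`_i].
Proof.
case=> w [w0 w1 ->]; exists w; split => // a.
by rewrite dot_sum; apply: eq_bigr => i _; rewrite dotZr.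
Qed.

Lemma hull_le (R : realFieldType) (n : nat) (V : seq 'rV[R]_n) y a r :
  in_hull V y -> (forall v, v \in V -> dot a v <= r) -> dot a y <= r.
Proof.
move=> /hull_dot [w [w0 w1 ->]] H.
have -> : r = \sum_i w i * r by rewrite -mulr_suml w1 mul1r.
apply: ler_sum => i _; apply: ler_wpM2l => //; apply: H; exact: mem_nth.
Qed.



Lemma exposed_vertex (R : realFieldType) (n : nat) (V : seq 'rV[R]_n) m b :
  m \in V -> (forall v, v \in V -> v != m -> dot b v < dot b m) -> is_vertex V m.
Proof.
move=> mV H; split.
  have i0lt : (index m V < size V)%N by rewrite index_mem.
  pose i0 : 'I_(size V) := Ordinal i0lt.
  exists (fun i => if i == i0 then 1 else 0); split.
  - by move=> i; case: ifP.
  - by rewrite (bigD1 i0) //= eqxx big1 ?addr0 // => i /negbTE ->.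
  - rewrite (bigD1 i0) //= eqxx big1 ?addr0 ?scale1r ?nth_index //.
    by move=> i /negbTE ->; rewrite scale0r.
exists b => y [w [w0 w1 Hy]] ym.
case: (ltrP (dot b y) (dot b m)) => // Hle; exfalso; apply: ym.
have Hd : forall a, dot a y = \sum_i w i * dot a V`_i.
  by move=> a; rewrite Hy dot_sum; apply: eq_bigr => i _; rewrite dotZr.
have Hnn : forall i, 0 <= w i * (dot b m - dot b V`_i).
  move=> i; apply: mulr_ge0 => //.
  case: (V`_i =P m) => [->|/eqP ne]; first by rewrite subrr.
  by rewrite subr_ge0 ltW // H // mem_nth.
have Hs : \sum_i w i * (dot b m - dot b V`_i) = 0.
  apply/eqP; rewrite eq_le; apply/andP; split; last by apply: sumr_ge0.
  rewrite (eq_bigr (fun i => w i * dot b m - w i * dot b V`_i)); last by move=> i _; rewrite mulrBr.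
  by rewrite sumrB -mulr_suml w1 mul1r -Hd subr_le0.
have Hz := (psumr_eq0P (fun i _ => Hnn i) Hs).
rewrite Hy (eq_bigr (fun i => w i *: m)); last first.
  move=> i _; case: (V`_i =P m) => [->//|/eqP ne].
  have := Hz i isT; case/eqP; rewrite mulf_eq0 => /orP [/eqP ->|]; first by rewrite !scale0r.
  by rewrite subr_eq0 => /eqP e; move: (H _ (mem_nth 0 (ltn_ord i)) ne); rewrite e ltxx.
by rewrite -scaler_suml w1 scale1r.
Qed.



Lemma sum_ge_mem (R : realFieldType) (T : eqType) (L : seq T) (F : T -> R) x :
  (forall y, 0 <= F y) -> x \in L -> F x <= \sum_(y <- L) F y.
Proof.
move=> F0; elim: L => // y L IH; rewrite in_cons big_cons => /orP [/eqP ->|xL].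
  by rewrite lerDl sumr_ge0.
by rewrite (le_trans (IH xL)) // lerDr.
Qed.

Lemma exists_max (R : realFieldType) (T : eqType) (L : seq T) (F : T -> R) :
  L != [::] -> exists2 m, m \in L & forall v, v \in L -> F v <= F m.
Proof.
elim: L => // y L IH _; case: (altP (L =P [::])) => [->|/IH [m mL Hm]].
  by exists y; rewrite ?mem_seq1 // => v; rewrite mem_seq1 => /eqP ->.
case: (lerP (F y) (F m)) => Hy.
  exists m; first by rewrite in_cons mL orbT.
  by move=> v; rewrite in_cons => /orP [/eqP ->|/Hm].
exists y; first by rewrite in_cons eqxx.
move=> v; rewrite in_cons => /orP [/eqP ->//|/Hm vm]; exact: le_trans vm (ltW Hy).
Qed.

Lemma expose_step (R : realFieldType) (n : nat) (L : seq 'rV[R]_n) (f b m : 'rV[R]_n) :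
  (forall v, v \in L -> dot f v <= dot f m) ->
  (forall v, v \in L -> dot f v = dot f m -> v != m -> dot b v < dot b m) ->
  exists K : R, forall v, v \in L -> v != m ->
    dot (K *: f + b) v < dot (K *: f + b) m.
Proof.
move=> Hf Hb.
pose F v := if dot f v < dot f m then `|dot b v - dot b m| / (dot f m - dot f v) else 0.
have F0 : forall v, 0 <= F v.
  move=> v; rewrite /F; case: ifP => // lt; apply: divr_ge0 => //.
  by rewrite subr_ge0 ltW.
exists (1 + \sum_(v <- L) F v) => v vL vm; rewrite !dotDl !dotZl.
have := Hf v vL; rewrite le_eqVlt => /orP [/eqP e|lt].
  by rewrite e ltrD2l Hb.
have gap : 0 < dot f m - dot f v by rewrite subr_gt0.
rewrite -ltrBrDl addrAC -mulrBr.
have HF : F v = `|dot b v - dot b m| / (dot f m - dot f v) by rewrite /F lt.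
have Hk : 1 + F v <= 1 + \sum_(v <- L) F v by rewrite lerD2l sum_ge_mem.
have HH := lerD (ler_wpM2r (ltW gap) Hk) (lexx (dot b m)).
apply: (lt_le_trans _ HH).
rewrite mulrDl mul1r HF divfK ?gt_eqF // -ltrBlDr.
apply: (le_lt_trans (ler_norm _)); rewrite ltrDr //.
Qed.



Definition dcoef (R : realFieldType) (a : R) : R :=
  if a == 0 then 1 else if a == 1 then -1 else 0.

Definition gg (R : realFieldType) (a b : R) : nat :=
  if a == 0 then (if b == 0 then 0%N else if b == 1 then 2%N else 1%N)
  else if a == 1 then (if b == 1 then 0%N else if b == 0 then 2%N else 1%N)
  else 0%N.

Lemma half_facts (R : realFieldType) :
  ((2^-1 == 0 :> R) = false /\ (2^-1 == 1 :> R) = false) /\ ((1 == 0 :> R) = false /\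
      (0 == 2^-1 :> R) = false) /\ ((1 == 2^-1 :> R) = false /\ (0 == 1 :> R) = false).
Proof.
by do !split; apply/eqP => h; lra.
Qed.

Lemma gg_eq (R : realFieldType) (a b : R) :
  a \in [:: 0; 2^-1; 1] -> b \in [:: 0; 2^-1; 1] ->
  2 * (dcoef a * b - dcoef a * a) = (gg a b)%:R.
Proof.
have [[h1 h2] [[h3 h4] [h5 h6]]] := half_facts R.
rewrite !inE => /or3P [] /eqP -> /or3P [] /eqP ->;
  rewrite /gg /dcoef ?eqxx ?h1 ?h2 ?h3 ?h4 ?h5 ?h6 /=; lra.
Qed.

Lemma gg_le (R : realFieldType) (a b : R) :
  a \in [:: 0; 2^-1; 1] -> (gg a b <= (if a == 2^-1 then 0 else 2))%N.
Proof.
have [[h1 h2] [[h3 h4] [h5 h6]]] := half_facts R.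
rewrite !inE => /or3P [] /eqP ->; rewrite /gg ?eqxx ?h1 ?h2 ?h3 ?h4 ?h5 ?h6 /=;
  repeat case: ifP => //. all: try exact: leq0n.
Qed.

Lemma gg0 (R : realFieldType) (a b : R) :
  a \in [:: 0; 2^-1; 1] -> b \in [:: 0; 2^-1; 1] -> gg a b = 0%N ->
  a = 2^-1 \/ b = a.
Proof.
have [[h1 h2] [[h3 h4] [h5 h6]]] := half_facts R.
rewrite !inE => /or3P [] /eqP -> /or3P [] /eqP ->;
  rewrite /gg ?eqxx ?h1 ?h2 ?h3 ?h4 ?h5 ?h6 /=; move=> // _; auto.
Qed.

Definition d0 (R : realFieldType) (n : nat) (x0 : 'rV[R]_n) : 'rV[R]_n :=
  \row_i dcoef (x0 0 i).

Definition phi (R : realFieldType) (n : nat) (x0 y : 'rV[R]_n) : nat :=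
  (\sum_i gg (x0 0%R i) (y 0%R i))%N.

Lemma phi_eq (R : realFieldType) (n : nat) (x0 y : 'rV[R]_n) :
  (forall i, x0 0 i \in [:: 0; 2^-1; 1]) -> (forall i, y 0 i \in [:: 0; 2^-1; 1]) ->
  (phi x0 y)%:R = 2 * (dot (d0 x0) y - dot (d0 x0) x0).
Proof.
move=> Hx Hy; rewrite /phi natr_sum /dot -sumrB mulr_sumr.
by apply: eq_bigr => i _; rewrite mxE gg_eq.
Qed.

Lemma phi_le (R : realFieldType) (n : nat) (x0 y : 'rV[R]_n) :
  (forall i, x0 0 i \in [:: 0; 2^-1; 1]) ->
  (phi x0 y <= 2 * (n - num_halves x0))%N.
Proof.
move=> Hx; rewrite /phi.
apply: leq_trans; first (apply: leq_sum => i _; exact: (gg_le (y 0 i) (Hx i))).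
have -> : (\sum_i (if x0 0%R i == (2^-1)%R then 0 else 2) = \sum_(i in [predC [set i | x0 0%R i == (2^-1)%R]]) 2)%N.
  by rewrite [RHS]big_mkcond; apply: eq_bigr => i _; rewrite !inE; case: ifP.
rewrite sum_nat_const mulnC leq_mul2l; apply/orP; right.
have Hc := cardC [set i | x0 0 i == 2^-1]; rewrite card_ord in Hc.
move: Hc; rewrite /num_halves; set a := #|[set i | _]|; set b := #|[predC _]|. lia.
Qed.

Lemma phi0 (R : realFieldType) (n : nat) (x0 y : 'rV[R]_n) :
  (forall i, x0 0 i \in [:: 0; 2^-1; 1]) -> (forall i, y 0 i \in [:: 0; 2^-1; 1]) ->
  num_halves x0 = num_halves y -> phi x0 y = 0%N -> y = x0.
Proof.
move=> Hx Hy Hh /eqP; rewrite /phi sum_nat_eq0 => /forallP Hg.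
have Hg' : forall i, x0 0 i = 2^-1 \/ y 0 i = x0 0 i.
  by move=> i; apply: gg0 => //; apply/eqP; exact: Hg.
have sub : [set i | y 0 i == 2^-1] \subset [set i | x0 0 i == 2^-1].
  apply/subsetP => i; rewrite !inE => /eqP yi.
  by case: (Hg' i) => [->//|e]; rewrite -e yi.
have /eqP eqs : [set i | y 0 i == 2^-1] == [set i | x0 0 i == 2^-1].
  by rewrite -(subset_leqif_cards sub).2; move: Hh; rewrite /num_halves => ->.
apply/rowP => j; case: (Hg' j) => [e|//].
have : j \in [set i | x0 0 i == 2^-1] by rewrite inE e.
by rewrite -eqs inE e => /eqP.
Qed.



Lemma dot_self_gt0 (R : realFieldType) (n : nat) (u : 'rV[R]_n) :
  u != 0 -> 0 < dot u u.
Proof.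
move=> un0; case: (pickP (fun i => u 0 i != 0)) => [i ui|H]; last first.
  exfalso; move/eqP: un0; apply; apply/rowP => i; rewrite mxE.
  by move/negbFE: (H i) => /eqP.
rewrite /dot (bigD1 i) //=.
have t : 0 < u 0 i * u 0 i by rewrite -expr2 lt_def sqr_ge0 sqrf_eq0 ui.
have r : 0 <= \sum_(j | j != i) u 0 j * u 0 j.
  by apply: sumr_ge0 => j _; rewrite -expr2 sqr_ge0.
lra.
Qed.

Lemma norm_expose (R : realFieldType) (n : nat) (m v : 'rV[R]_n) :
  v != m -> dot v v <= dot m m -> dot (2 *: m) v < dot (2 *: m) m.
Proof.
move=> vm H; have := dot_self_gt0 (_ : m - v != 0).
rewrite subr_eq0 eq_sym => /(_ vm).
rewrite !dotBr !dotDl !dotNl !dotZl (dotC v m) => h; lra.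
Qed.


Unset Implicit Arguments.
Set Strict Implicit.

Theorem mainTheorem2 (R : realFieldType) (n : nat) (V : seq 'rV[R]_n) (s : nat) :
  half_integral V ->
  (forall x, is_vertex V x -> (num_halves x + s)%N = n) ->
  exists D : 'rV[R]_n -> 'rV[R]_n -> 'rV[R]_n,
    forall (c x0 : 'rV[R]_n), is_vertex V x0 ->
      cmax_of_dmin_face V c (D x0 c) x0 /\
      forall p : seq 'rV[R]_n,
        coherent_path V c (D x0 c) p -> head 0 p = x0 ->
        ((size p).-1 <= 2 * s)%N.
Proof.
move=> HI Hs.
exists (fun x0 _ => d0 x0) => c x0 Vx0.
set d := d0 x0.
have Hx0 := HI x0 Vx0.
have key1 : forall y, is_vertex V y -> (phi x0 y)%:R = 2 * (dot d y - dot d x0).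
  by move=> y Vy; apply: phi_eq => //; apply: HI.
have key2 : forall y, is_vertex V y -> dot d y = dot d x0 -> y = x0.
  move=> y Vy e; apply: phi0 => //; first exact: HI.
    by have := Hs _ Vx0; have := Hs _ Vy; lia.
  by apply/eqP; rewrite -(eqr_nat R) key1 // e subrr mulr0.
have key3 : forall y, is_vertex V y -> dot d x0 <= dot d y.
  move=> y Vy; have := key1 y Vy; have := ler0n R (phi x0 y); lra.
have HV : V != [::].
  rewrite -size_eq0 -lt0n; case: Vx0 => [[w [_ w1 _]] _]; move: w w1.
  by case: (size V) => [|//] w; rewrite big_ord0 => /eqP; rewrite eq_sym oner_eq0.
have [m1 m1V Hm1] := exists_max (fun v => dot (- d) v) HV.
pose M1 := [seq v <- V | dot d v == dot d m1].
have M1N : M1 != [::].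
  have h : m1 \in M1 by rewrite mem_filter eqxx m1V.
  by apply/eqP => e; rewrite e in h.
have [m2 m2M Hm2] := exists_max (fun v => dot c v) M1N.
pose M2 := [seq v <- M1 | dot c v == dot c m2].
have M2N : M2 != [::].
  have h : m2 \in M2 by rewrite mem_filter eqxx m2M.
  by apply/eqP => e; rewrite e in h.
have [m mM Hm] := exists_max (fun v => dot v v) M2N.
have mM1 : m \in M1 by move: mM; rewrite mem_filter => /andP [].
have mV : m \in V by move: mM1; rewrite mem_filter => /andP [].
have cm : dot c m = dot c m2 by move: mM; rewrite mem_filter => /andP [/eqP].
have dm : dot d m = dot d m1 by move: mM1; rewrite mem_filter => /andP [/eqP].
have [K1 HK1] : exists K : R, forall v, v \in M1 -> v != m ->
    dot (K *: c + 2 *: m) v < dot (K *: c + 2 *: m) m.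
  apply: expose_step => v vM1.
    by rewrite cm; apply: Hm2.
  move=> e vm; apply: norm_expose => //; apply: Hm.
  by rewrite mem_filter vM1 -cm e eqxx.
have [K2 HK2] : exists K : R, forall v, v \in V -> v != m ->
    dot (K *: (- d) + (K1 *: c + 2 *: m)) v < dot (K *: (- d) + (K1 *: c + 2 *: m)) m.
  apply: expose_step => v vV.
    by rewrite !dotNl dm -!dotNl; apply: Hm1.
  move=> e vm; apply: HK1 => //.
  by move: e; rewrite !dotNl => /oppr_inj e; rewrite mem_filter vV e dm eqxx.
have Vm : is_vertex V m by apply: exposed_vertex mV HK2.
have dmx : dot d m = dot d x0.
  apply/eqP; rewrite eq_le key3 // andbT.
  have := hull_le (a := - d) (r := dot (- d) m1) Vx0.1 (fun v vV => Hm1 v vV).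
  by rewrite !dotNl dm lerN2.
have mx : m = x0 by apply: key2.
have dmin : forall v, v \in V -> dot d x0 <= dot d v.
  by move=> v vV; have := Hm1 v vV; rewrite !dotNl lerN2 -dm dmx.
split.
  split => // [y Hy|y Hy Hmin].
    have := hull_le (a := - d) (r := - dot d x0) Hy.
    rewrite dotNl lerN2; apply => v vV; rewrite dotNl lerN2; exact: dmin.
  have Hyx : dot d y <= dot d x0 by apply: Hmin; exact: Vx0.1.
  have [w [w0 w1 Hd]] := hull_dot Hy.
  have Hnn : forall i, 0 <= w i * (dot d V`_i - dot d x0).
    by move=> i; apply: mulr_ge0 => //; rewrite subr_ge0 dmin // mem_nth.
  have Hs0 : \sum_i w i * (dot d V`_i - dot d x0) = 0.
    apply/eqP; rewrite eq_le; apply/andP; split; last by apply: sumr_ge0.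
    rewrite (eq_bigr (fun i => w i * dot d V`_i - w i * dot d x0)); last by move=> i _; rewrite mulrBr.
    by rewrite sumrB -mulr_suml w1 mul1r -Hd subr_le0.
  have Hz := psumr_eq0P (fun i _ => Hnn i) Hs0.
  rewrite Hd.
  have -> : dot c x0 = \sum_i w i * dot c x0 by rewrite -mulr_suml w1 mul1r.
  apply: ler_sum => i _.
  have := Hz i isT; move/eqP; rewrite mulf_eq0 => /orP [/eqP ->|]; first by rewrite !mul0r.
  rewrite subr_eq0 => /eqP e; apply: ler_wpM2l => //.
  rewrite -mx cm; apply: Hm2.
  by rewrite mem_filter -dm dmx e eqxx mem_nth.
move=> p [Hsz Hhd Hlt Hstep] Hh.
have claim : forall k, (k < size p)%N ->
  (k <= phi x0 (nth 0%R p k))%N /\ is_vertex V (nth 0 p k).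
  elim=> [_|k IH kp].
    by rewrite nth0 Hh; split.
  have [IH1 IH2] := IH (ltnW kp).
  have [[_ Vk1 _ _] dlt _] := Hstep k kp.
  split => //.
  have : (phi x0 (nth 0%R p k))%:R < (phi x0 (nth 0%R p k.+1))%:R :> R.
    rewrite key1 // key1 //; lra.
  rewrite ltr_nat; lia.
have [h1 h2] : ((size p).-1 <= phi x0 (nth 0%R p (size p).-1))%N /\ _ := claim (size p).-1 ltac:(by rewrite ltn_predL).
apply: (leq_trans h1); apply: (leq_trans (phi_le _ Hx0)).
by have := Hs _ Vx0; lia.
Qed.
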